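(* Let $G=K(n_1,\dots,n_s)$ be a complete $s$-partite graph ($s\ge 2$) with parts $V_1,\dots,V_s$, $|V_j|=n_j$. If $j\in\{1,\dots,s\}$ satisfies $n_j\ge 2$, then $\chi_1(G)=\chi_1(G-V_j)+1$.
   Context: A map $f:V(G)\to\{1,\dots,k\}$ is a $1$-relaxed $k$-coloring if every vertex $u$ has at most one neighbor $v$ with $f(v)=f(u)$; $\chi_1(G)$ is the minimum $k$ for which such a coloring exists. $G-V_j$ is the graph obtained by deleting the vertices of $V_j$. *)

(* Defs.v *)
From mathcomp Require Import all_boot all_order.
Set Implicit Arguments. Unset Strict Implicit. Unset Printing Implicit Defensive.

(* A graph is given by a vertex set A : {set T} (T a finType) and an edge
   relation e : rel T; the graph is the one induced on A. *)
Definition relaxed1_colorable (T : finType) (e : rel T) (A : {set T}) (k : nat) : bool :=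
  [exists f : {ffun T -> 'I_k},
     [forall u in A, #|[set v in A | e u v && (f v == f u)]| <= 1]].

Lemma relaxed1_colorable_card (T : finType) (e : rel T) (A : {set T}) :
  relaxed1_colorable e A #|T|.
Proof.
apply/existsP; exists [ffun x => enum_rank x]; apply/forall_inP => u _.
apply: (leq_trans (subset_leq_card (B := [set u]) _)); last by rewrite cards1.
apply/subsetP => v; rewrite !inE !ffunE => /and3P[_ _ /eqP /enum_rank_inj ->].
by rewrite eqxx.
Qed.

Lemma relaxed1_colorable_ex (T : finType) (e : rel T) (A : {set T}) :
  exists k, relaxed1_colorable e A k.
Proof. by exists #|T|; apply: relaxed1_colorable_card. Qed.

Definition chi1 (T : finType) (e : rel T) (A : {set T}) : nat :=
  ex_minn (relaxed1_colorable_ex e A).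

(* The complete s-partite graph K(n_1,...,n_s): vertices are pairs (i, a) with
   i : 'I_s the part and a : 'I_(n i); two vertices are adjacent iff they lie in
   different parts. *)
Definition kpart_vertex (s : nat) (n : 'I_s -> nat) : finType :=
  {i : 'I_s & 'I_(n i)}.

Definition kpart_adj (s : nat) (n : 'I_s -> nat) : rel (kpart_vertex n) :=
  fun x y => tag x != tag y.

Definition kpart_part (s : nat) (n : 'I_s -> nat) (j : 'I_s) : {set kpart_vertex n} :=
  [set x | tag x == j].

(* Main.v *)
Require Import Defs.
From mathcomp Require Import all_boot all_order.
Set Implicit Arguments. Unset Strict Implicit. Unset Printing Implicit Defensive.

Lemma recolor (T : finType) (e : rel T) (A : {set T}) k (f : {ffun T -> 'I_k.+1})
  (c : 'I_k.+1) x0 : x0 \in A -> (forall u, u \in A -> f u != c) ->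
  [forall u in A, #|[set v in A | e u v && (f v == f u)]| <= 1] ->
  relaxed1_colorable e A k.
Proof.
move=> x0A hc /forall_inP hf.
have [d _] : exists d : 'I_k, true.
  case: (unliftP c (f x0)) => [y _|h]; first by exists y.
  by move: (hc x0 x0A); rewrite h eqxx.
apply/existsP; exists [ffun x => odflt d (unlift c (f x))]; apply/forall_inP => u uA.
apply: leq_trans (hf u uA); apply: subset_leq_card; apply/subsetP => v; rewrite !inE !ffunE.
case/andP => vA /andP[euv]; rewrite vA euv /=.
case: (unliftP c (f v)) => [yv ->|hv]; last by move: (hc v vA); rewrite hv eqxx.
case: (unliftP c (f u)) => [yu ->|hu]; last by move: (hc u uA); rewrite hu eqxx.
by move=> /= /eqP ->.
Qed.

Lemma chi1P (T : finType) (e : rel T) (A : {set T}) :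
  relaxed1_colorable e A (chi1 e A) /\
  forall k, relaxed1_colorable e A k -> chi1 e A <= k.
Proof. rewrite /chi1; case: ex_minnP => m Hm Hmin; split => //. Qed.


Lemma core (s : nat) (n : 'I_s -> nat) (j : 'I_s) m (f : {ffun kpart_vertex n -> 'I_m}) :
  2 <= s -> (forall i, 0 < n i) -> 2 <= n j ->
  (forall x, x \in [set: kpart_vertex n] ->
     #|[set v in [set: kpart_vertex n] | kpart_adj x v & f v == f x]| <= 1) ->
  relaxed1_colorable (@kpart_adj s n) (~: kpart_part n j) m.-1.
Proof.
move=> hs hn hj hf.
set A := ~: kpart_part n j.
  have h0 : 0 < n j by apply: ltnW.
  pose a : kpart_vertex n := Tagged (fun i => 'I_(n i)) (Ordinal h0).
  pose b : kpart_vertex n := Tagged (fun i => 'I_(n i)) (Ordinal hj).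
  have ab : a != b.
    by apply/negP => /eqP /(congr1 (fun x : kpart_vertex n => nat_of_ord (tagged x))).
  have taga : tag a = j by [].
  have tagb : tag b = j by [].
  have inA v : (v \in A) = (tag v != j) by rewrite !inE.
  have small (w : kpart_vertex n) : tag w = j ->
      #|[set v in A | f v == f w]| <= 1.
    move=> tw; apply: leq_trans (hf w (in_setT _)).
    apply: subset_leq_card; apply/subsetP => v; rewrite !inE /kpart_adj tw.
    by rewrite eq_sym.
  have [x0 x0A] : exists x0, x0 \in A.
    pose i0 : 'I_s := Ordinal (ltnW hs).
    pose i1 : 'I_s := Ordinal hs.
    pose i := if j == i0 then i1 else i0.
    exists (Tagged (fun i => 'I_(n i)) (Ordinal (hn i))); rewrite inA /= /i.
    case: (j =P i0) => [ej|nej].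
      by rewrite ej; apply/negP => /eqP /(congr1 val).
    by rewrite eq_sym; apply/eqP.
  move: f hf small; case: m => [|m] f hf small; first by case: (f a).
  pose g := [ffun v => if f v == f b then f a else f v].
  apply: (@recolor _ _ _ _ g (f b) x0 x0A).
  - move=> u uA; rewrite ffunE.
    case: (f u =P f b) => [fub|/eqP //].
    apply/negP => /eqP fab.
    have := hf u (in_setT _).
    have: [set a; b] \subset [set v in [set: kpart_vertex n] | kpart_adj u v & f v == f u].
      apply/subsetP => v; rewrite !inE /kpart_adj.
      move: uA; rewrite inA => uA.
      by case/orP => /eqP ->; rewrite ?taga ?tagb uA ?fab fub eqxx.
    move/subset_leq_card; rewrite cards2 ab => h1 h2.
    by have := leq_trans h1 h2.
  - apply/forall_inP => u uA.
    set S := [set v in A | _].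
    case: (boolP (g u == f a)) => gu.
      have hsub : S \subset ([set v in A | f v == f a] :|: [set v in A | f v == f b]) :\ u.
        apply/subsetP => v; rewrite !inE /kpart_adj !ffunE.
        case/andP => vA /andP[uv]; rewrite ffunE in gu; rewrite (eqP gu) vA /=.
        have -> : v != u by apply: contraNneq uv => ->.
        by case: (f v == f b) => /= [_|->]; rewrite ?orbT.
      have uin : u \in [set v in A | f v == f a] :|: [set v in A | f v == f b].
        move: gu; rewrite !inE -inA uA ffunE /=.
        by case: (f u == f b) => /= [_|->]; rewrite ?orbT.
      apply: leq_trans (subset_leq_card hsub) _.
      have := cardsD1 u ([set v in A | f v == f a] :|: [set v in A | f v == f b]).
      rewrite uin add1n => hc.
      have := leq_trans (leq_card_setU _ _) (leq_add (small a taga) (small b tagb)).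
      rewrite hc ltnS. move=> h. exact: h.
    apply: leq_trans (hf u (in_setT _)).
    apply: subset_leq_card; apply/subsetP => v; rewrite !inE !ffunE.
    move: gu; rewrite ffunE.
    case: (boolP (f u == f b)) => fub; first by rewrite eqxx.
    move=> fua /andP[_ /andP[uv]]; rewrite uv /=.
    case: (boolP (f v == f b)) => fvb //.
    by move/eqP => h; rewrite h eqxx in fua.
Qed.

Theorem corollary4p2 (s : nat) (n : 'I_s -> nat) (j : 'I_s) :
  2 <= s ->
  (forall i, 0 < n i) ->
  2 <= n j ->
  chi1 (@kpart_adj s n) [set: kpart_vertex n]
  = (chi1 (@kpart_adj s n) (~: kpart_part n j)).+1.
Proof.
move=> hs hn hj.
set A := ~: kpart_part n j.
have [/existsP[f /forall_inP hf] Hmin] := chi1P (@kpart_adj s n) [set: kpart_vertex n].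
have [/existsP[g /forall_inP hg] Hmin'] := chi1P (@kpart_adj s n) A.
set m := chi1 _ setT in f hf Hmin *.
set k := chi1 _ A in g hg Hmin' *.
apply/eqP; rewrite eqn_leq; apply/andP; split.
-
  apply: Hmin; apply/existsP.
  exists [ffun x => if tag x == j then ord_max else lift ord_max (g x)].
  apply/forall_inP => u _.
  case: (boolP (tag u == j)) => hu.
    rewrite (_ : [set _ in _ | _] = set0) ?cards0 //; apply/setP => v.
    rewrite !inE !ffunE hu /kpart_adj.
    case: (boolP (tag v == j)) => hv.
      by rewrite (eqP hu) (eqP hv) eqxx.
    by have H := @neq_lift k.+1 ord_max (g v); rewrite eq_sym in H; rewrite (negbTE H) andbF.
  apply: leq_trans (hg u _); last by rewrite !inE.
  apply: subset_leq_card; apply/subsetP => v; rewrite !inE !ffunE (negbTE hu).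
  case/andP => huv.
  case: (boolP (tag v == j)) => hv.
    by have H := @neq_lift k.+1 ord_max (g u); case/andP => _; rewrite (negbTE H).
  move=> /andP[huv'] /eqP /lift_inj ->. by rewrite huv' eqxx.
-
  have mpos : 0 < m := leq_ltn_trans (leq0n _) (ltn_ord (f (Tagged (fun i => 'I_(n i)) (Ordinal (hn j))))).
  have := Hmin' _ (@core s n j m f hs hn hj hf).
  by rewrite -(prednK mpos).
Qed.
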